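(* Let $\sigma_{0}^{2}>0$, $C_{\mathrm{P}}>0$ and $\epsilon\in(0,1]$ be such that $H(\epsilon):=2\log\big(\tfrac{2}{C_{\mathrm{P}}\epsilon^{2}}\big)>0$. For $\bar{n},\bar{\sigma}>0$ let \[ G(\bar{n};\bar{\sigma}):=\frac{2}{C_{\mathrm{P}}}\exp\Big\{-\frac{1}{2\bar{\sigma}^{2}}\mathsf{W}^{2}\Big(\frac{C_{\mathrm{P}}\bar{n}\bar{\sigma}^{2}}{2\exp(\bar{\sigma}^{2}/2)}\Big)\Big\},\qquad\mathsf{B}(\bar{n},\bar{\sigma}):=\bar{n}\bar{N},\quad\bar{N}:=\sigma_{0}^{2}/\bar{\sigma}^{2}, \] where $\mathsf{W}$ is the Lambert W function on $[0,\infty)$ (inverse of $x\mapsto xe^{x}$) and $\mathsf{W}^{2}$ its square. Then the function $\mathsf{B}$ on $\mathbb{R}_{+}^{2}$, restricted to the constraint set $\{(\bar{n},\bar{\sigma}):G(\bar{n};\bar{\sigma})=\epsilon^{2}\}$, is minimized when \[ \bar{\sigma}=\bar{\sigma}_{\star}(\epsilon):=\frac{\sqrt{H(\epsilon)+12}-\sqrt{H(\epsilon)}}{2}, \] and $\lim_{H(\epsilon)\to\infty}\sqrt{H(\epsilon)}\,\bar{\sigma}_{\star}(\epsilon)=3$. Moreover, if $H(\epsilon)\ge1$, then taking $\bar{\sigma}(\epsilon)=3/\sqrt{H(\epsilon)}$ and $\bar{n}(\epsilon)$ such that $G(\bar{n}(\epsilon);\bar{\sigma}(\epsilon))=\epsilon^{2}$,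 one has \[ \bar{N}(\epsilon)=\frac{2}{9}\sigma_{0}^{2}\log\Big(\tfrac{2}{C_{\mathrm{P}}\epsilon^{2}}\Big),\quad\bar{n}(\epsilon)\le\frac{4\exp(15/2)}{3C_{\mathrm{P}}}\log\Big(\tfrac{2}{C_{\mathrm{P}}\epsilon^{2}}\Big),\quad\mathsf{B}(\epsilon)\le\frac{8\sigma_{0}^{2}\exp(15/2)}{27C_{\mathrm{P}}}\log\Big(\tfrac{2}{C_{\mathrm{P}}\epsilon^{2}}\Big)^{2}, \] where $\mathsf{B}(\epsilon):=\mathsf{B}(\bar{n}(\epsilon),\bar{\sigma}(\epsilon))$.
   Context: Interpretation (not needed for the statement): $G(n;\sigma)$ is an upper bound on the convergence rate $\|\tilde{P}^{n}f\|_{2}^{2}/\|f\|_{\mathrm{osc}}^{2}$ of a pseudo-marginal chain with lognormal weights $\log W\sim N(-\sigma^{2}/2,\sigma^{2})$ whose marginal chain has a strong Poincaré constant $C_{\mathrm{P}}$, with $\sigma^{2}=\sigma_{0}^{2}/N$ where $N$ is the number of particles. *)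

(* Defs.v *)
From Stdlib Require Import Reals ClassicalEpsilon.
From Coquelicot Require Import Coquelicot.
Open Scope R_scope.

Definition LambertW (y : R) : R :=
  epsilon (inhabits 0) (fun x => 0 <= x /\ x * exp x = y).

Definition G (CP n s : R) : R :=
  2 / CP * exp (- (1 / (2 * s ^ 2)) * (LambertW (CP * n * s ^ 2 / (2 * exp (s ^ 2 / 2)))) ^ 2).

Definition Nbar (sigma0_sq s : R) : R := sigma0_sq / s ^ 2.
Definition B (sigma0_sq n s : R) : R := n * Nbar sigma0_sq s.

Definition H (CP eps : R) : R := 2 * ln (2 / (CP * eps ^ 2)).

Definition sigma_star_of_H (h : R) : R := (sqrt (h + 12) - sqrt h) / 2.
Definition sigma_star (CP eps : R) : R := sigma_star_of_H (H CP eps).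

(* Main.v *)
Require Import Defs.
From Stdlib Require Import Reals Lra Psatz ClassicalEpsilon.
From Coquelicot Require Import Coquelicot.
Open Scope R_scope.

Lemma xexp_strict x y : 0 <= x -> x < y -> x * exp x < y * exp y.
Proof.
  intros. assert (exp x < exp y) by (apply exp_increasing; lra).
  assert (0 < exp x) by apply exp_pos. nra.
Qed.

Lemma W_spec y : 0 <= y -> 0 <= LambertW y /\ LambertW y * exp (LambertW y) = y.
Proof.
  intros Hy. unfold LambertW. apply epsilon_spec.
  destruct (Req_dec y 0) as [->|Hy0].
  - exists 0. split; [lra|ring].
  - assert (Hc : continuity (fun x => x * exp x - y)).
    { apply continuity_minus; [apply continuity_mult|apply continuity_const; intros ? ?; reflexivity].
      + apply derivable_continuous, derivable_id.
      + apply derivable_continuous, derivable_exp. }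
    assert (1 + y <= exp y) by apply exp_ineq1_le.
    pose proof (exp_pos 0); pose proof (exp_pos y).
    destruct (IVT _ 0 y Hc) as [z [Hz1 Hz2]]; [lra| simpl; nra | nra |].
    exists z. split; lra.
Qed.

Lemma W_of x : 0 <= x -> LambertW (x * exp x) = x.
Proof.
  intros Hx. assert (H0 : 0 <= x * exp x) by (pose proof (exp_pos x); nra).
  destruct (W_spec _ H0) as [H1 H2].
  destruct (Rtotal_order (LambertW (x * exp x)) x) as [Hl|[He|Hg]]; auto.
  - pose proof (xexp_strict _ _ H1 Hl). lra.
  - pose proof (xexp_strict _ _ Hx Hg). lra.
Qed.

Lemma G_eq CP eps n s : 0 < CP -> 0 < eps -> 0 < H CP eps -> 0 < n -> 0 < s ->
  (G CP n s = eps ^ 2 <->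
   n = 2 * sqrt (H CP eps) * exp (s ^ 2 / 2 + s * sqrt (H CP eps)) / (CP * s)).
Proof.
  intros hC he hH hn hs.
  set (a := sqrt (H CP eps)).
  assert (ha : 0 < a) by (apply sqrt_lt_R0; auto).
  assert (ha2 : a * a = H CP eps) by (apply sqrt_sqrt; lra).
  set (L := ln (2 / (CP * eps ^ 2))).
  assert (hHL : H CP eps = 2 * L) by reflexivity.
  assert (he2 : 0 < eps ^ 2) by (apply pow_lt; auto).
  assert (hEL : exp (- L) = CP * eps ^ 2 / 2).
  { unfold L. rewrite exp_Ropp, exp_ln.
    - field; lra.
    - apply Rdiv_lt_0_compat; [lra| apply Rmult_lt_0_compat; auto]. }
  assert (hes : 0 < exp (s ^ 2 / 2)) by apply exp_pos.
  unfold G. split.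
  - intros HG.
    set (y := CP * n * s ^ 2 / (2 * exp (s ^ 2 / 2))).
    assert (hy : 0 <= y).
    { unfold y. apply Rlt_le, Rdiv_lt_0_compat; [|lra].
      apply Rmult_lt_0_compat; [nra| apply pow_lt; auto]. }
    fold y in HG.
    destruct (W_spec y hy) as [hw1 hw2].
    set (w := LambertW y) in *.
    assert (HE : exp (- (1 / (2 * s ^ 2)) * w ^ 2) = exp (- L)).
    { rewrite hEL. apply (Rmult_eq_reg_l (2 / CP)).
      - rewrite HG. field. lra.
      - apply Rgt_not_eq, Rdiv_lt_0_compat; lra. }
    apply exp_inv in HE.
    assert (hw : w ^ 2 = (s * a) ^ 2).
    { replace ((s*a)^2) with (s^2 * (a*a)) by ring. rewrite ha2, hHL.
      assert (0 < s^2) by (apply pow_lt; auto).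
      apply (Rmult_eq_reg_l (- (1 / (2 * s ^ 2)))).
      - rewrite HE. field. lra.
      - apply Ropp_neq_0_compat, Rgt_not_eq, Rdiv_lt_0_compat; lra. }
    assert (hw' : w = s * a).
    { assert (0 <= s * a) by nra. nra. }
    rewrite hw' in hw2. unfold y in hw2.
    assert (H0 : n = 2 * exp (s ^ 2 / 2) * (s * a * exp (s * a)) / (CP * s ^ 2)).
    { rewrite hw2. field. split; lra. }
    rewrite H0, exp_plus. field. lra.
  - intros Hn.
    assert (Hy : CP * n * s ^ 2 / (2 * exp (s ^ 2 / 2)) = (s * a) * exp (s * a)).
    { rewrite Hn, exp_plus. field. lra. }
    rewrite Hy, W_of by nra.
    replace (- (1 / (2 * s ^ 2)) * (s * a) ^ 2) with (- L).
    + rewrite hEL. field. lra.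
    + replace ((s*a)^2) with (s^2 * (a*a)) by ring. rewrite ha2, hHL. field. lra.
Qed.

Lemma frac_le X Y p q : 0 < p -> 0 < q -> X * q <= Y * p -> X / p <= Y / q.
Proof.
  intros hp hq h.
  replace (X / p) with ((X * q) * / (p * q)) by (field; lra).
  replace (Y / q) with ((Y * p) * / (p * q)) by (field; lra).
  apply Rmult_le_compat_r; [apply Rlt_le, Rinv_0_lt_compat; nra | auto].
Qed.

Lemma exp3ln s : 0 < s -> exp (3 * ln s) = s ^ 3.
Proof.
  intros. replace (3 * ln s) with (ln s + ln s + ln s) by ring.
  rewrite !exp_plus, exp_ln by auto. ring.
Qed.

Lemma min_key a s0 s : 0 < a -> 0 < s0 -> 0 < s -> s0 ^ 2 + a * s0 = 3 ->
  exp (s0 ^ 2 / 2 + s0 * a) / s0 ^ 3 <= exp (s ^ 2 / 2 + s * a) / s ^ 3.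
Proof.
  intros ha h0 hs hq.
  apply frac_le; try (apply pow_lt; auto).
  rewrite <- !exp3ln by auto. rewrite <- !exp_plus.
  assert (K : s0 ^ 2 / 2 + s0 * a + 3 * ln s <= s ^ 2 / 2 + s * a + 3 * ln s0).
  { pose proof (exp_ineq1_le (ln (s / s0))) as Hln.
    rewrite exp_ln in Hln by (apply Rdiv_lt_0_compat; auto).
    rewrite ln_div in Hln by auto.
    assert (h3 : 3 * (s / s0) = (s0 + a) * s) by (rewrite <- hq; field; lra).
    pose proof (pow2_ge_0 (s - s0)). set (t := s / s0) in *. nra. }
  destruct (Rle_lt_or_eq_dec _ _ K) as [Hl|He].
  - apply Rlt_le, exp_increasing; auto.
  - rewrite He; lra.
Qed.

Lemma lim_part : is_lim (fun h => sqrt h * sigma_star_of_H h) p_infty 3.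
Proof.
  apply is_lim_spec. intros e. simpl.
  pose proof (cond_pos e) as he.
  exists (Rmax 1 (9 / e)). intros h Hh.
  assert (h1 : 1 < h) by (eapply Rle_lt_trans; [apply Rmax_l|exact Hh]).
  assert (h2 : 9 / e < h) by (eapply Rle_lt_trans; [apply Rmax_r|exact Hh]).
  unfold sigma_star_of_H.
  set (r := sqrt h). set (b := sqrt (h + 12)).
  assert (hr : r * r = h) by (apply sqrt_sqrt; lra).
  assert (hb : b * b = h + 12) by (apply sqrt_sqrt; lra).
  assert (hr0 : 0 < r) by (apply sqrt_lt_R0; lra).
  assert (hb0 : 0 <= b) by apply sqrt_pos.
  set (d := b - r).
  assert (hd : d * (d + 2 * r) = 12) by (unfold d; nra).
  assert (hd0 : 0 < d) by (unfold d; nra).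
  assert (hrd : r * d <= 6) by nra.
  assert (Heq : r * (d / 2) - 3 = - (d * d / 4)) by nra.
  rewrite Heq, Rabs_Ropp, Rabs_pos_eq by nra.
  assert (e * h > 9) by (apply Rmult_lt_compat_l with (r := e) in h2; [|lra];
     unfold Rdiv in h2; rewrite <- Rmult_assoc, (Rmult_comm e 9), Rmult_assoc, Rinv_r in h2; lra).
  assert (d * d * (r * r) <= 36) by (assert (0 < r * d) by nra; nra).
  nra.
Qed.

Theorem proposition57 (sigma0_sq CP eps : R)
  (hs0 : 0 < sigma0_sq) (hCP : 0 < CP) (heps : 0 < eps <= 1)
  (hH : 0 < H CP eps) :
  (exists nstar : R, 0 < nstar /\ G CP nstar (sigma_star CP eps) = eps ^ 2 /\
     forall n s : R, 0 < n -> 0 < s -> G CP n s = eps ^ 2 ->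
       B sigma0_sq nstar (sigma_star CP eps) <= B sigma0_sq n s)
  /\
  is_lim (fun h => sqrt h * sigma_star_of_H h) p_infty 3
  /\
  (1 <= H CP eps ->
    let sb := 3 / sqrt (H CP eps) in
    (exists n : R, 0 < n /\ G CP n sb = eps ^ 2) /\
    forall n : R, 0 < n -> G CP n sb = eps ^ 2 ->
      Nbar sigma0_sq sb = 2 / 9 * sigma0_sq * ln (2 / (CP * eps ^ 2)) /\
      n <= 4 * exp (15 / 2) / (3 * CP) * ln (2 / (CP * eps ^ 2)) /\
      B sigma0_sq n sb <= 8 * sigma0_sq * exp (15 / 2) / (27 * CP)
                           * (ln (2 / (CP * eps ^ 2))) ^ 2).
Proof.
  destruct heps as [he0 he1].
  assert (ha : 0 < sqrt (H CP eps)) by (apply sqrt_lt_R0; auto).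
  assert (ha2 : sqrt (H CP eps) * sqrt (H CP eps) = H CP eps) by (apply sqrt_sqrt; lra).
  assert (hHL : H CP eps = 2 * ln (2 / (CP * eps ^ 2))) by reflexivity.
  set (a := sqrt (H CP eps)) in *.
  set (L := ln (2 / (CP * eps ^ 2))) in *.
  split; [|split; [apply lim_part|]].
  - set (s0 := sigma_star CP eps).
    assert (hb2 : sqrt (H CP eps + 12) * sqrt (H CP eps + 12) = H CP eps + 12)
      by (apply sqrt_sqrt; lra).
    assert (hb0 : 0 <= sqrt (H CP eps + 12)) by apply sqrt_pos.
    assert (hs0d : s0 = (sqrt (H CP eps + 12) - a) / 2) by reflexivity.
    set (b := sqrt (H CP eps + 12)) in *.
    assert (hba : a < b) by nra.
    assert (hs0p : 0 < s0) by lra.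
    assert (hq : s0 ^ 2 + a * s0 = 3) by (rewrite hs0d; nra).
    exists (2 * a * exp (s0 ^ 2 / 2 + s0 * a) / (CP * s0)).
    assert (hnp : 0 < 2 * a * exp (s0 ^ 2 / 2 + s0 * a) / (CP * s0)).
    { pose proof (exp_pos (s0 ^ 2 / 2 + s0 * a)).
      apply Rdiv_lt_0_compat; nra. }
    split; [auto|split].
    + apply (G_eq CP eps); auto.
    + intros n s hn hs HG. apply (G_eq CP eps) in HG; auto. fold a in HG.
      unfold B, Nbar. rewrite HG.
      pose proof (min_key a s0 s ha hs0p hs hq) as K.
      replace (2 * a * exp (s0 ^ 2 / 2 + s0 * a) / (CP * s0) * (sigma0_sq / s0 ^ 2))
        with (2 * a * sigma0_sq / CP * (exp (s0 ^ 2 / 2 + s0 * a) / s0 ^ 3)) by (field; lra).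
      replace (2 * a * exp (s ^ 2 / 2 + s * a) / (CP * s) * (sigma0_sq / s ^ 2))
        with (2 * a * sigma0_sq / CP * (exp (s ^ 2 / 2 + s * a) / s ^ 3)) by (field; lra).
      apply Rmult_le_compat_l; auto.
      apply Rlt_le, Rdiv_lt_0_compat; nra.
  - intros H1 sb.
    assert (hsb : 0 < sb) by (apply Rdiv_lt_0_compat; lra).
    assert (hsba : sb * a = 3) by (unfold sb; field; lra).
    assert (hsb2 : sb ^ 2 = 9 / H CP eps) by (unfold sb; rewrite <- ha2; field; lra).
    assert (hnf : 2 * a * exp (sb ^ 2 / 2 + sb * a) / (CP * sb)
                  = 4 * L * exp (9 / (2 * H CP eps) + 3) / (3 * CP)).
    { rewrite hsba, hsb2. unfold sb. replace (9 / H CP eps / 2 + 3) with (9 / (2 * H CP eps) + 3)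
        by (field; lra).
      replace L with (a * a / 2) by (rewrite ha2, hHL; field).
      field. lra. }
    split.
    + exists (2 * a * exp (sb ^ 2 / 2 + sb * a) / (CP * sb)).
      split.
      * pose proof (exp_pos (sb ^ 2 / 2 + sb * a)). apply Rdiv_lt_0_compat; nra.
      * apply (G_eq CP eps); auto.
        pose proof (exp_pos (sb ^ 2 / 2 + sb * a)). apply Rdiv_lt_0_compat; nra.
    + intros n hn HG. apply (G_eq CP eps) in HG; auto. fold a in HG.
      rewrite hnf in HG.
      assert (hN : Nbar sigma0_sq sb = 2 / 9 * sigma0_sq * L).
      { unfold Nbar. rewrite hsb2, hHL. field. lra. }
      assert (hE : exp (9 / (2 * H CP eps) + 3) <= exp (15 / 2)).
      { assert (H9 : 9 / (2 * H CP eps) <= 9 / 2).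
        { unfold Rdiv. apply Rmult_le_compat_l; [lra|].
          apply Rinv_le_contravar; lra. }
        destruct (Rle_lt_or_eq_dec (9 / (2 * H CP eps) + 3) (15/2)) as [Hl|He]; [lra| |].
        - apply Rlt_le, exp_increasing; auto.
        - rewrite He; lra. }
      assert (hn' : n <= 4 * exp (15 / 2) / (3 * CP) * L).
      { rewrite HG. unfold Rdiv.
        replace (4 * L * exp (9 * / (2 * H CP eps) + 3) * / (3 * CP))
          with ((4 * L * / (3 * CP)) * exp (9 * / (2 * H CP eps) + 3)) by ring.
        replace (4 * exp (15 * / 2) * / (3 * CP) * L)
          with ((4 * L * / (3 * CP)) * exp (15 * / 2)) by ring.
        apply Rmult_le_compat_l; [|auto].
        apply Rlt_le. apply Rmult_lt_0_compat; [lra|apply Rinv_0_lt_compat; lra]. }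
      split; [auto|split; [auto|]].
      unfold B. rewrite hN.
      replace (8 * sigma0_sq * exp (15 / 2) / (27 * CP) * L ^ 2)
        with ((4 * exp (15 / 2) / (3 * CP) * L) * (2 / 9 * sigma0_sq * L)) by (field; lra).
      apply Rmult_le_compat_r; auto. nra.
Qed.
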